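(* Let $G=(V,E)$ be a finite graph with couplings $J_e>0$. Then the XOR-Ising measure satisfies, for all $\sigma\in\{-1,+1\}^V$, $$\mu^{\mathrm{XOR}}[\sigma]\propto Z_{S(\sigma),2J}.$$
   Context: $S(\sigma)=\{uv\in E\mid\sigma_u=\sigma_v\}$. For $H\subset E$ and couplings $K$, $Z_{H,K}=\sum_{\tau\in\{\pm1\}^V}\exp(\sum_{uv\in H}K_{uv}\tau_u\tau_v)$ is the Ising partition function on the spanning subgraph $(V,H)$; $2J=(2J_e)_e$. The Ising measure on $G$ is $\mu[\tau]\propto\exp(\sum_{uv\in E}J_{uv}\tau_u\tau_v)$, and $\mu^{\mathrm{XOR}}$ is the law of the pointwise product $\tau^1\tau^2$ of two independent samples of $\mu$. *)

(* Defs.v *)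
From mathcomp Require Import all_boot all_order all_algebra.
From mathcomp Require Import all_classical all_reals all_analysis.
Set Implicit Arguments. Unset Strict Implicit. Unset Printing Implicit Defensive.
Import Order.TTheory GRing.Theory Num.Theory.
Local Open Scope ring_scope.

Section Ising.
Variables (R : realType) (V : finType).

(* A spin configuration tau in {-1,+1}^V is encoded as a boolean function;
   true stands for +1 and false for -1. *)
Definition spin (b : bool) : R := if b then 1 else -1.

Definition simple_graph (E : {set {set V}}) : Prop :=
  forall e, e \in E -> #|e| = 2%N.

Definition edge_spin (tau : {ffun V -> bool}) (e : {set V}) : R :=
  \prod_(x in e) spin (tau x).

Definition energy (H : {set {set V}}) (K : {set V} -> R)
  (tau : {ffun V -> bool}) : R :=
  \sum_(e in H) K e * edge_spin tau e.

Definition Zpart (H : {set {set V}}) (K : {set V} -> R) : R :=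
  \sum_(tau : {ffun V -> bool}) expR (energy H K tau).

Definition ising (E : {set {set V}}) (J : {set V} -> R)
  (tau : {ffun V -> bool}) : R :=
  expR (energy E J tau) / Zpart E J.

(* Law of the pointwise product tau1 tau2 of two independent Ising samples. *)
Definition xor_ising (E : {set {set V}}) (J : {set V} -> R)
  (sigma : {ffun V -> bool}) : R :=
  \sum_(tau1 : {ffun V -> bool}) \sum_(tau2 : {ffun V -> bool} |
      [forall v, spin (sigma v) == spin (tau1 v) * spin (tau2 v)])
    ising E J tau1 * ising E J tau2.

Definition agree_edges (E : {set {set V}}) (sigma : {ffun V -> bool})
  : {set {set V}} :=
  [set e in E | [forall u in e, forall v in e, sigma u == sigma v]].

End Ising.

(* Main.v *)
Require Import Defs.
From mathcomp Require Import all_boot all_order all_algebra.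
From mathcomp Require Import all_classical all_reals all_analysis.
From mathcomp Require Import lra.
Import Order.TTheory GRing.Theory Num.Theory.
Local Open Scope ring_scope.

Lemma spin_xnor (R : realType) (a b : bool) :
  spin R (a == b) = spin R a * spin R b.
Proof. by case: a; case: b; rewrite /spin /= ?mulr1 ?mul1r ?mulrNN ?mulr1 ?mulN1r. Qed.

Lemma spin_inj (R : realType) (a b : bool) : spin R a = spin R b -> a = b.
Proof. case: a; case: b; rewrite /spin //= => H; exfalso; move: H; lra. Qed.

Lemma edge_spin_mul (R : realType) (V : finType) (s t : {ffun V -> bool}) e :
  edge_spin R [ffun v => s v == t v] e = edge_spin R s e * edge_spin R t e.
Proof.
rewrite /edge_spin -big_split; apply: eq_bigr => x _; by rewrite ffunE spin_xnor.
Qed.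

Lemma edge_spin_agree (R : realType) (V : finType) (s : {ffun V -> bool})
  (e : {set V}) : #|e| = 2%N ->
  edge_spin R s e =
  if [forall u in e, forall v in e, s u == s v] then 1 else -1.
Proof.
move/eqP/cards2P => [x [y [nxy ->]]].
rewrite /edge_spin big_setU1 ?inE // big_set1.
case: ifP.
  move/forallP => /(_ x); rewrite !inE eqxx /= => /forallP /(_ y).
  rewrite !inE eqxx orbT /= => /eqP ->.
  by case: (s y); rewrite /spin ?mulr1 ?mulrNN ?mulr1.
move/negbT/forallPn => [u]; rewrite negb_imply => /andP [].
rewrite !inE => Hu /forallPn [v]; rewrite negb_imply => /andP [].
rewrite !inE => Hv Hne.
have Hxy : s x != s y.
  apply: contra Hne => /eqP Hxy.
  by case/orP: Hu => /eqP ->; case/orP: Hv => /eqP ->; rewrite ?Hxy.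
move: Hxy; case: (s x); case: (s y) => //= _; rewrite /spin ?mulr1 ?mul1r //.
Qed.

Theorem lemmaA3 (R : realType) (V : finType) (E : {set {set V}})
  (J : {set V} -> R) :
  simple_graph E ->
  (forall e, e \in E -> 0 < J e) ->
  exists c : R, 0 < c /\
    forall sigma : {ffun V -> bool},
      xor_ising E J sigma = c * Zpart (agree_edges E sigma) (fun e => 2 * J e).
Proof.
move=> HE _.
set Z := Zpart E J.
have Zgt0 : 0 < Z.
  rewrite /Z /Zpart (bigD1 [ffun=> true]) //=.
  apply: ltr_wpDr; last exact: expR_gt0.
  by apply: sumr_ge0 => i _; apply/ltW/expR_gt0.
exists (Z^-1 * Z^-1); split; first by rewrite mulr_gt0 ?invr_gt0.
move=> s; rewrite /xor_ising /Zpart mulr_sumr; apply: eq_bigr => t _.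
rewrite (big_pred1 [ffun v => s v == t v]); last first.
  move=> t2 /=; apply/forallP/eqP.
    move=> H; apply/ffunP => v; rewrite ffunE.
    have := H v; rewrite -spin_xnor => /eqP /spin_inj ->.
    by case: (t v); case: (t2 v).
  move=> -> v; rewrite ffunE -spin_xnor; apply/eqP; congr spin.
  by case: (t v); case: (s v).
rewrite /ising -/Z mulrACA -expRD mulrC; congr (_ * _); congr expR.
rewrite /energy -big_split /= /agree_edges [LHS]big_mkcond [RHS]big_mkcond /=.
apply: eq_bigr => e _; rewrite inE.
case He: (e \in E) => /=; last by [].
rewrite edge_spin_mul (@edge_spin_agree R V s e (HE e He)).
case: ifP => _; last by rewrite mulN1r mulrN subrr.
by rewrite mul1r -mulrA mulr_natl mulr2n.
Qed.
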